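(* Let $E_1,E_2,E_3,H$ be logically independent events with $H\ne\emptyset$, and let $\mathscr C_i=E_i|H$ ($i=1,2,3$), $\mathscr C_{ij}=(E_i|H)\wedge(E_j|H)$ ($1\le i<j\le3$), $\mathscr C_{123}=(E_1|H)\wedge(E_2|H)\wedge(E_3|H)$. Then an assessment $(x_1,x_2,x_3,x_{12},x_{13},x_{23},x_{123})$ on $\{\mathscr C_1,\mathscr C_2,\mathscr C_3,\mathscr C_{12},\mathscr C_{13},\mathscr C_{23},\mathscr C_{123}\}$ is coherent if and only if $(x_1,x_2,x_3)\in[0,1]^3$; $\max\{x_1+x_2-1,x_{13}+x_{23}-x_3,0\}\le x_{12}\le\min\{x_1,x_2\}$; $\max\{x_1+x_3-1,x_{12}+x_{23}-x_2,0\}\le x_{13}\le\min\{x_1,x_3\}$; $\max\{x_2+x_3-1,x_{12}+x_{13}-x_1,0\}\le x_{23}\le\min\{x_2,x_3\}$; $1-x_1-x_2-x_3+x_{12}+x_{13}+x_{23}\ge0$; $x_{123}\ge\max\{0,x_{12}+x_{13}-x_1,x_{12}+x_{23}-x_2,x_{13}+x_{23}-x_3\}$; $x_{123}\le\min\{x_{12},x_{13},x_{23},1-x_1-x_2-x_3+x_{12}+x_{13}+x_{23}\}$.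
   Context: Events are identified with their indicators; $\bar E$ is the negation of $E$. For $H\ne\emptyset$ the conditional event $E|H$ is true if $EH$ is true, false if $\bar EH$ is true, void if $\bar H$ is true; with $P(E|H)=x$ it is identified with the random quantity $EH+x\bar H$, and a conditional random quantity $X|H$ with prevision $\mu$ with $XH+\mu\bar H$. Coherence (de Finetti): an assessment $(\mu_1,\dots,\mu_m)$ on $\{X_1|H_1,\dots,X_m|H_m\}$ is coherent iff for all real stakes $s_i$ the gain $G=\sum_is_iH_i(X_i-\mu_i)$, restricted to $H_1\vee\dots\vee H_m$, satisfies $\min G\le0\le\max G$. Logical independence: all conjunctions of the listed events or their negations are nonempty. Conjunction of conditional events $E_i|H_i$, $i\in\{1,\dots,n\}$: given prevision values $x_S$ for the sub-conjunctions $\mathscr C_S=\bigwedge_{i\in S}(E_i|H_i)$, $\emptyset\ne S\subsetneq\{1,\dots,n\}$ (with $x_{\{i\}}=P(E_i|H_i)$), $\mathscr C_{1\cdots n}$ equals $1$ if all $E_iH_i$ are true, $0$ if some $\bar E_iH_i$ is true, $x_S$ if $(\bigwedge_{i\in S}\bar H_i)(\bigwedge_{i\notin S}E_iH_i)$ is true, and its own prevision $x_{1\cdots n}$ if all $H_i$ are false. Here all $H_i=H$, $x_i=\mathbb P(\mathscr C_i)$, $x_{ij}=\mathbb P(\mathscr C_{ij})$, $x_{123}=\mathbb P(\mathscr C_{123})$. *)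

(* Defs.v *)
From HB Require Import structures.
From mathcomp Require Import all_boot all_order all_algebra.
From mathcomp Require Import reals.
Set Implicit Arguments. Unset Strict Implicit. Unset Printing Implicit Defensive.
Import Order.TTheory GRing.Theory Num.Theory.
Local Open Scope ring_scope.

Section Defs.
Variables (R : realType) (T : Type).

(* Events are boolean predicates on a sample space T (identified with their
   indicators, b%:R). *)

(* Conditional event E|H with P(E|H) = x, as the random quantity EH + x(~H). *)
Definition cond_event (E H : T -> bool) (x : R) (w : T) : R :=
  if H w then (E w)%:R else x.

Definition conj2 (E1 E2 H : T -> bool) (x12 : R) (w : T) : R :=
  if H w then (E1 w && E2 w)%:R else x12.

(* Conjunction (E1|H) /\ (E2|H) /\ (E3|H) with prevision x123: 1 if E1E2E3H,
   0 if some ~Ei H, x123 if ~H (the cases x_S with S a proper nonempty subset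
   cannot occur since all conditioning events equal H). *)
Definition conj3 (E1 E2 E3 H : T -> bool) (x123 : R) (w : T) : R :=
  if H w then [&& E1 w, E2 w & E3 w]%:R else x123.

(* de Finetti coherence of the assessment mu on the family of conditional
   random quantities X_i | H_i (i < m): for all real stakes s, the gain
   G = sum_i s_i H_i (X_i - mu_i), restricted to H_1 \/ ... \/ H_m,
   satisfies min G <= 0 <= max G (i.e. G takes a value <= 0 and a value
   >= 0 on H_1 \/ ... \/ H_m). *)
Definition gain m (X : 'I_m -> T -> R) (Hc : 'I_m -> T -> bool)
  (mu : 'I_m -> R) (s : 'I_m -> R) (w : T) : R :=
  \sum_(i < m) s i * ((Hc i w)%:R * (X i w - mu i)).

Definition coherent m (X : 'I_m -> T -> R) (Hc : 'I_m -> T -> bool)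
  (mu : 'I_m -> R) : Prop :=
  forall s : 'I_m -> R,
    (exists2 w, [exists i, Hc i w] & gain X Hc mu s w <= 0) /\
    (exists2 w, [exists i, Hc i w] & 0 <= gain X Hc mu s w).

End Defs.

Definition fam7 (A : Type) (d a1 a2 a3 a4 a5 a6 a7 : A) (i : 'I_7) : A :=
  nth d [:: a1; a2; a3; a4; a5; a6; a7] i.

(* Main.v *)
Require Import Defs.
From HB Require Import structures.
From mathcomp Require Import all_boot all_order all_algebra.
From mathcomp Require Import reals ring lra.
Import Order.TTheory GRing.Theory Num.Theory.
Local Open Scope ring_scope.

Section Aux.
Variable R : realType.

Definition o1 : 'I_7 := lift ord0 ord0.
Definition o2 : 'I_7 := lift ord0 (lift ord0 ord0).
Definition o3 : 'I_7 := lift ord0 (lift ord0 (lift ord0 ord0)).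
Definition o4 : 'I_7 := lift ord0 (lift ord0 (lift ord0 (lift ord0 ord0))).
Definition o5 : 'I_7 := lift ord0 (lift ord0 (lift ord0 (lift ord0 (lift ord0 ord0)))).
Definition o6 : 'I_7 := lift ord0 (lift ord0 (lift ord0 (lift ord0 (lift ord0 (lift ord0 ord0))))).

Definition gexpr (s : 'I_7 -> R) (x1 x2 x3 x12 x13 x23 x123 : R) (b1 b2 b3 : bool) : R :=
  s ord0 * (b1%:R - x1) + s o1 * (b2%:R - x2) + s o2 * (b3%:R - x3)
  + s o3 * ((b1 && b2)%:R - x12) + s o4 * ((b1 && b3)%:R - x13)
  + s o5 * ((b2 && b3)%:R - x23) + s o6 * ([&& b1, b2 & b3]%:R - x123).

Lemma gain_eq (T : Type) (E1 E2 E3 H : T -> bool) x1 x2 x3 x12 x13 x23 x123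
  (s : 'I_7 -> R) w : H w ->
 gain (fam7 (fun _ : T => 0 : R)
       (cond_event E1 H x1) (cond_event E2 H x2) (cond_event E3 H x3)
       (conj2 E1 E2 H x12) (conj2 E1 E3 H x13) (conj2 E2 E3 H x23)
       (conj3 E1 E2 E3 H x123))
    (fun _ => H)
    (fam7 0 x1 x2 x3 x12 x13 x23 x123) s w
 = gexpr s x1 x2 x3 x12 x13 x23 x123 (E1 w) (E2 w) (E3 w).
Proof.
move=> hw; rewrite /gain !big_ord_recl big_ord0 /= /fam7 /=.
rewrite /cond_event /conj2 /conj3 hw /gexpr /o1 /o2 /o3 /o4 /o5 /o6.
rewrite !mul1r addr0 !addrA //.
Qed.

Lemma key (p1 p2 p3 p4 p5 p6 p7 p8 g1 g2 g3 g4 g5 g6 g7 g8 : R) :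
  0 <= p1 -> 0 <= p2 -> 0 <= p3 -> 0 <= p4 -> 0 <= p5 -> 0 <= p6 -> 0 <= p7 -> 0 <= p8 ->
  p1 + p2 + p3 + p4 + p5 + p6 + p7 + p8 = 1 ->
  p1 * g1 + p2 * g2 + p3 * g3 + p4 * g4 + p5 * g5 + p6 * g6 + p7 * g7 + p8 * g8 = 0 ->
  [|| g1 <= 0, g2 <= 0, g3 <= 0, g4 <= 0, g5 <= 0, g6 <= 0, g7 <= 0 | g8 <= 0].
Proof.
move=> h1 h2 h3 h4 h5 h6 h7 h8 hs hg.
set m := Num.min g1 (Num.min g2 (Num.min g3 (Num.min g4 (Num.min g5 (Num.min g6 (Num.min g7 g8)))))).
have m1 : m <= g1 by rewrite /m !ge_min lexx ?orbT.
have m2 : m <= g2 by rewrite /m !ge_min lexx ?orbT.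
have m3 : m <= g3 by rewrite /m !ge_min lexx ?orbT.
have m4 : m <= g4 by rewrite /m !ge_min lexx ?orbT.
have m5 : m <= g5 by rewrite /m !ge_min lexx ?orbT.
have m6 : m <= g6 by rewrite /m !ge_min lexx ?orbT.
have m7 : m <= g7 by rewrite /m !ge_min lexx ?orbT.
have m8 : m <= g8 by rewrite /m !ge_min lexx ?orbT.
have q1 : 0 <= p1 * (g1 - m) by apply: mulr_ge0; lra.
have q2 : 0 <= p2 * (g2 - m) by apply: mulr_ge0; lra.
have q3 : 0 <= p3 * (g3 - m) by apply: mulr_ge0; lra.
have q4 : 0 <= p4 * (g4 - m) by apply: mulr_ge0; lra.
have q5 : 0 <= p5 * (g5 - m) by apply: mulr_ge0; lra.
have q6 : 0 <= p6 * (g6 - m) by apply: mulr_ge0; lra.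
have q7 : 0 <= p7 * (g7 - m) by apply: mulr_ge0; lra.
have q8 : 0 <= p8 * (g8 - m) by apply: mulr_ge0; lra.
have : m <= 0 by nra.
by rewrite /m !ge_min.
Qed.


Lemma fwd (T : Type) (E1 E2 E3 H : T -> bool) x1 x2 x3 x12 x13 x23 x123 s :
  coherent
    (fam7 (fun _ : T => 0 : R)
       (cond_event E1 H x1) (cond_event E2 H x2) (cond_event E3 H x3)
       (conj2 E1 E2 H x12) (conj2 E1 E3 H x13) (conj2 E2 E3 H x23)
       (conj3 E1 E2 E3 H x123))
    (fun _ => H)
    (fam7 0 x1 x2 x3 x12 x13 x23 x123) ->
  exists b1 b2 b3, gexpr s x1 x2 x3 x12 x13 x23 x123 b1 b2 b3 <= 0.
Proof.
move=> /(_ s) [[w /existsP [i hw] hg] _].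
by exists (E1 w), (E2 w), (E3 w); move: hg; rewrite gain_eq.
Qed.

Lemma bwd (T : Type) (E1 E2 E3 H : T -> bool) x1 x2 x3 x12 x13 x23 x123 s
  (Hindep : forall b1 b2 b3 b4 : bool,
      exists w : T, [/\ E1 w = b1, E2 w = b2, E3 w = b3 & H w = b4])
  (P : R -> Prop) b1 b2 b3 :
  P (gexpr s x1 x2 x3 x12 x13 x23 x123 b1 b2 b3) ->
  exists2 w, [exists i : 'I_7, H w] &
   P (gain (fam7 (fun _ : T => 0 : R)
       (cond_event E1 H x1) (cond_event E2 H x2) (cond_event E3 H x3)
       (conj2 E1 E2 H x12) (conj2 E1 E3 H x13) (conj2 E2 E3 H x23)
       (conj3 E1 E2 E3 H x123))
    (fun _ => H)
    (fam7 0 x1 x2 x3 x12 x13 x23 x123) s w).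
Proof.
move=> hP; have [w [e1 e2 e3 h]] := Hindep b1 b2 b3 true.
exists w; first by apply/existsP; exists ord0.
by rewrite gain_eq // e1 e2 e3.
Qed.

End Aux.

Theorem theorem21 (R : realType) (T : Type) (E1 E2 E3 H : T -> bool)
  (Hindep : forall b1 b2 b3 b4 : bool,
      exists w : T, [/\ E1 w = b1, E2 w = b2, E3 w = b3 & H w = b4])
  (Hne : exists w : T, H w)
  (x1 x2 x3 x12 x13 x23 x123 : R) :
  coherent
    (fam7 (fun _ : T => 0 : R)
       (cond_event E1 H x1) (cond_event E2 H x2) (cond_event E3 H x3)
       (conj2 E1 E2 H x12) (conj2 E1 E3 H x13) (conj2 E2 E3 H x23)
       (conj3 E1 E2 E3 H x123))
    (fun _ => H)
    (fam7 0 x1 x2 x3 x12 x13 x23 x123)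
  <->
  ((0 <= x1 <= 1) /\ (0 <= x2 <= 1) /\ (0 <= x3 <= 1) /\
   (Num.max (Num.max (x1 + x2 - 1) (x13 + x23 - x3)) 0 <= x12 <= Num.min x1 x2) /\
   (Num.max (Num.max (x1 + x3 - 1) (x12 + x23 - x2)) 0 <= x13 <= Num.min x1 x3) /\
   (Num.max (Num.max (x2 + x3 - 1) (x12 + x13 - x1)) 0 <= x23 <= Num.min x2 x3) /\
   (0 <= 1 - x1 - x2 - x3 + x12 + x13 + x23) /\
   (Num.max (Num.max (Num.max 0 (x12 + x13 - x1)) (x12 + x23 - x2)) (x13 + x23 - x3)
      <= x123) /\
   (x123 <= Num.min (Num.min (Num.min x12 x13) x23)
               (1 - x1 - x2 - x3 + x12 + x13 + x23))).
Proof.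
split.
- move=> coh.
  have F := fun c1 c2 c3 c4 c5 c6 c7 : R => @fwd R _ _ _ _ _ _ _ _ _ _ _ _ (fam7 0 c1 c2 c3 c4 c5 c6 c7) coh.
  have p0 : 0 <= x123.
  { have [b1 [b2 [b3]]] := F 0 0 0 0 0 0 1.
    rewrite /gexpr /o1 /o2 /o3 /o4 /o5 /o6 /fam7 /=.
    by case: b1; case: b2; case: b3 => /= h; lra. }
  have p1 : 0 <= x12 - x123.
  { have [b1 [b2 [b3]]] := F 0 0 0 1 0 0 (-1).
    rewrite /gexpr /o1 /o2 /o3 /o4 /o5 /o6 /fam7 /=.
    by case: b1; case: b2; case: b3 => /= h; lra. }
  have p2 : 0 <= x13 - x123.
  { have [b1 [b2 [b3]]] := F 0 0 0 0 1 0 (-1).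
    rewrite /gexpr /o1 /o2 /o3 /o4 /o5 /o6 /fam7 /=.
    by case: b1; case: b2; case: b3 => /= h; lra. }
  have p3 : 0 <= x23 - x123.
  { have [b1 [b2 [b3]]] := F 0 0 0 0 0 1 (-1).
    rewrite /gexpr /o1 /o2 /o3 /o4 /o5 /o6 /fam7 /=.
    by case: b1; case: b2; case: b3 => /= h; lra. }
  have p4 : 0 <= x1 - x12 - x13 + x123.
  { have [b1 [b2 [b3]]] := F 1 0 0 (-1) (-1) 0 1.
    rewrite /gexpr /o1 /o2 /o3 /o4 /o5 /o6 /fam7 /=.
    by case: b1; case: b2; case: b3 => /= h; lra. }
  have p5 : 0 <= x2 - x12 - x23 + x123.
  { have [b1 [b2 [b3]]] := F 0 1 0 (-1) 0 (-1) 1.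
    rewrite /gexpr /o1 /o2 /o3 /o4 /o5 /o6 /fam7 /=.
    by case: b1; case: b2; case: b3 => /= h; lra. }
  have p6 : 0 <= x3 - x13 - x23 + x123.
  { have [b1 [b2 [b3]]] := F 0 0 1 0 (-1) (-1) 1.
    rewrite /gexpr /o1 /o2 /o3 /o4 /o5 /o6 /fam7 /=.
    by case: b1; case: b2; case: b3 => /= h; lra. }
  have p7 : 0 <= 1 - x1 - x2 - x3 + x12 + x13 + x23 - x123.
  { have [b1 [b2 [b3]]] := F (-1) (-1) (-1) 1 1 1 (-1).
    rewrite /gexpr /o1 /o2 /o3 /o4 /o5 /o6 /fam7 /=.
    by case: b1; case: b2; case: b3 => /= h; lra. }
  rewrite !ge_max !le_min.
  by repeat split; repeat (apply/andP; split); lra.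
- move=> [_ [_ [_ [_ [_ [_ [_ [hlo hhi]]]]]]]].
  move: hlo; rewrite !ge_max => /andP[/andP[/andP[p0 q1] q2] q3].
  move: hhi; rewrite !le_min => /andP[/andP[/andP[q4 q5] q6] q7].
  move=> s; split.
  + have := @key R x123 (x12 - x123) (x13 - x123) (x23 - x123)
      (x1 - x12 - x13 + x123) (x2 - x12 - x23 + x123) (x3 - x13 - x23 + x123)
      (1 - x1 - x2 - x3 + x12 + x13 + x23 - x123)
      (gexpr R s x1 x2 x3 x12 x13 x23 x123 true true true)
      (gexpr R s x1 x2 x3 x12 x13 x23 x123 true true false)
      (gexpr R s x1 x2 x3 x12 x13 x23 x123 true false true)
      (gexpr R s x1 x2 x3 x12 x13 x23 x123 false true true)
      (gexpr R s x1 x2 x3 x12 x13 x23 x123 true false false)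
      (gexpr R s x1 x2 x3 x12 x13 x23 x123 false true false)
      (gexpr R s x1 x2 x3 x12 x13 x23 x123 false false true)
      (gexpr R s x1 x2 x3 x12 x13 x23 x123 false false false).
    move=> K.
    have S : x123 * gexpr R s x1 x2 x3 x12 x13 x23 x123 true true true +
      (x12 - x123) * gexpr R s x1 x2 x3 x12 x13 x23 x123 true true false +
      (x13 - x123) * gexpr R s x1 x2 x3 x12 x13 x23 x123 true false true +
      (x23 - x123) * gexpr R s x1 x2 x3 x12 x13 x23 x123 false true true +
      (x1 - x12 - x13 + x123) * gexpr R s x1 x2 x3 x12 x13 x23 x123 true false false +
      (x2 - x12 - x23 + x123) * gexpr R s x1 x2 x3 x12 x13 x23 x123 false true false +
      (x3 - x13 - x23 + x123) * gexpr R s x1 x2 x3 x12 x13 x23 x123 false false true +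
      (1 - x1 - x2 - x3 + x12 + x13 + x23 - x123) * gexpr R s x1 x2 x3 x12 x13 x23 x123 false false false = 0.
      rewrite /gexpr /=; move: (s ord0) (s o1) (s o2) (s o3) (s o4) (s o5) (s o6) => a b c d e f g; ring.
    move: (K ltac:(lra) ltac:(lra) ltac:(lra) ltac:(lra) ltac:(lra) ltac:(lra) ltac:(lra) ltac:(lra) ltac:(lra) S).
    have B := fun b1 b2 b3 => @bwd R _ _ _ _ _ _ _ _ _ _ _ _ s Hindep (fun r => r <= 0) b1 b2 b3.
    by case/or4P=> [/B|/B|/B|/or4P [/B|/B|/B|/orP [/B|/B]]].
  + have := @key R x123 (x12 - x123) (x13 - x123) (x23 - x123)
      (x1 - x12 - x13 + x123) (x2 - x12 - x23 + x123) (x3 - x13 - x23 + x123)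
      (1 - x1 - x2 - x3 + x12 + x13 + x23 - x123)
      (- gexpr R s x1 x2 x3 x12 x13 x23 x123 true true true)
      (- gexpr R s x1 x2 x3 x12 x13 x23 x123 true true false)
      (- gexpr R s x1 x2 x3 x12 x13 x23 x123 true false true)
      (- gexpr R s x1 x2 x3 x12 x13 x23 x123 false true true)
      (- gexpr R s x1 x2 x3 x12 x13 x23 x123 true false false)
      (- gexpr R s x1 x2 x3 x12 x13 x23 x123 false true false)
      (- gexpr R s x1 x2 x3 x12 x13 x23 x123 false false true)
      (- gexpr R s x1 x2 x3 x12 x13 x23 x123 false false false).
    move=> K.
    have S' : x123 * - gexpr R s x1 x2 x3 x12 x13 x23 x123 true true true +
      (x12 - x123) * - gexpr R s x1 x2 x3 x12 x13 x23 x123 true true false +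
      (x13 - x123) * - gexpr R s x1 x2 x3 x12 x13 x23 x123 true false true +
      (x23 - x123) * - gexpr R s x1 x2 x3 x12 x13 x23 x123 false true true +
      (x1 - x12 - x13 + x123) * - gexpr R s x1 x2 x3 x12 x13 x23 x123 true false false +
      (x2 - x12 - x23 + x123) * - gexpr R s x1 x2 x3 x12 x13 x23 x123 false true false +
      (x3 - x13 - x23 + x123) * - gexpr R s x1 x2 x3 x12 x13 x23 x123 false false true +
      (1 - x1 - x2 - x3 + x12 + x13 + x23 - x123) * - gexpr R s x1 x2 x3 x12 x13 x23 x123 false false false = 0.
      rewrite /gexpr /=; move: (s ord0) (s o1) (s o2) (s o3) (s o4) (s o5) (s o6) => a b c d e f g; ring.
    move: (K ltac:(lra) ltac:(lra) ltac:(lra) ltac:(lra) ltac:(lra) ltac:(lra) ltac:(lra) ltac:(lra) ltac:(lra) S').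
    have B := fun b1 b2 b3 => @bwd R _ _ _ _ _ _ _ _ _ _ _ _ s Hindep (fun r => 0 <= r) b1 b2 b3.
    rewrite !oppr_le0.
    by case/or4P=> [/B|/B|/B|/or4P [/B|/B|/B|/orP [/B|/B]]].
Qed.
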